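(* Let $K$ be an algebraically closed field of characteristic zero, $\deg_1$ the standard homogeneous degree on $K[x_1,\dots,x_n]$, $\Phi=(f_1,\dots,f_n)$ a polynomial automorphism of $K^n$, $d_i=\deg_1(f_i)$, $\deg_2$ the weighted degree with weights $d_i$ on $x_i$, $\nabla=d_1+\dots+d_n-n$, and assume the ideal $I=\{Q:Q(\overline{f_1},\dots,\overline{f_n})=0\}$ equals $(R)$ for an irreducible $R$ with $\frac{\partial R}{\partial x_n}\ne0$. Let $P$ be a nonzero polynomial and $k\in\mathbb{N}$ with $\tilde P\in(R^k)\setminus(R^{k+1})$. Then: (i) $\deg_1(\frac{\partial^kP}{\partial x_n^k}\circ\Phi)=\deg_2(\frac{\partial^kP}{\partial x_n^k})=\deg_2(P)-kd_n$; (ii) $\deg_1(P\circ\Phi)\ge\deg_2(P)-k\nabla$; (iii) $\deg_1(P\circ\Phi)\ge k(\deg_2(R)-\nabla)$.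
   Context: $\overline{f}$ denotes the homogeneous component of highest degree of $f$ and $\tilde P$ the leading term of $P$ with respect to $\deg_2$. *)

(* Defs.v *)
From HB Require Import structures.
From mathcomp Require Import all_boot all_order all_algebra.
From mathcomp.multinomials Require Import mpoly.
Set Implicit Arguments. Unset Strict Implicit. Unset Printing Implicit Defensive.
Import Order.TTheory GRing.Theory Num.Theory.
Local Open Scope ring_scope.

Section Defs.
Variables (n : nat) (K : fieldType).

(* deg_1 : standard total degree (0 for the zero polynomial) *)
Definition deg1 (p : {mpoly K[n]}) : nat := (msize p).-1.

Definition hbar (p : {mpoly K[n]}) : {mpoly K[n]} :=
  \sum_(m <- msupp p | mdeg m == deg1 p) p@_m *: 'X_[m].

Definition wdeg (w : 'I_n -> nat) (m : 'X_{1..n}) : nat :=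
  (\sum_(i < n) m i * w i)%N.

(* weighted degree of a polynomial (0 for the zero polynomial) *)
Definition wdegp (w : 'I_n -> nat) (p : {mpoly K[n]}) : nat :=
  (\max_(m <- msupp p) wdeg w m)%N.

Definition wtop (w : 'I_n -> nat) (p : {mpoly K[n]}) : {mpoly K[n]} :=
  \sum_(m <- msupp p | wdeg w m == wdegp w p) p@_m *: 'X_[m].

Definition in_pideal (A B : {mpoly K[n]}) : Prop := exists S, B = A * S.

(* irreducible: non-constant, and every factorization has a constant
   (= unit, as the product is nonzero) factor *)
Definition mirreducible (R : {mpoly K[n]}) : Prop :=
  (1 < msize R)%N /\
  forall A B : {mpoly K[n]}, R = A * B -> (msize A <= 1)%N \/ (msize B <= 1)%N.

Definition poly_automorphism (Phi : n.-tuple {mpoly K[n]}) : Prop :=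
  exists Psi : n.-tuple {mpoly K[n]},
    (forall i : 'I_n, tnth Phi i \mPo Psi = 'X_i) /\
    (forall i : 'I_n, tnth Psi i \mPo Phi = 'X_i).

End Defs.

(* Main.v *)
Require Import Defs.
From HB Require Import structures.
From mathcomp Require Import all_boot all_order all_algebra.
From mathcomp.multinomials Require Import mpoly.
From mathcomp Require Import zify ring.
Import Order.TTheory GRing.Theory Num.Theory.
Local Open Scope ring_scope.
Set Implicit Arguments. Unset Strict Implicit. Unset Printing Implicit Defensive.

Section Weighted.
Variables (n : nat) (K : fieldType).
Implicit Types (p q : {mpoly K[n]}) (w : 'I_n -> nat).

Definition pic w (D : nat) p : {mpoly K[n]} :=
  \sum_(m <- msupp p | wdeg w m == D) p@_m *: 'X_[m].

Lemma mcoeff_pic w D p m :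
  (pic w D p)@_m = if wdeg w m == D then p@_m else 0.
Proof.
rewrite /pic raddf_sum /=.
under eq_bigr do rewrite mcoeffZ mcoeffX.
case: (boolP (m \in msupp p)) => Hm.
  rewrite big_mkcond (bigD1_seq m) ?msupp_uniq //= eqxx mulr1 big1 ?addr0.
    by case: ifP.
  by move=> m' /negbTE ne; case: ifP => // _; rewrite ne mulr0.
rewrite big1; first by case: ifP => // _; rewrite (memN_msupp_eq0 Hm).
move=> m' _; case: (m' =P m) => [E|_]; last by rewrite mulr0.
by subst m'; rewrite (memN_msupp_eq0 Hm) mul0r.
Qed.

Lemma picD w D p q : pic w D (p + q) = pic w D p + pic w D q.
Proof.
by apply/mpolyP => m; rewrite mcoeffD !mcoeff_pic mcoeffD; case: ifP; rewrite ?addr0.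
Qed.

Lemma picZ w D c p : pic w D (c *: p) = c *: pic w D p.
Proof.
by apply/mpolyP => m; rewrite mcoeffZ !mcoeff_pic mcoeffZ; case: ifP; rewrite ?mulr0.
Qed.

Lemma pic0 w D : pic w D 0 = 0.
Proof. by apply/mpolyP => m; rewrite mcoeff_pic mcoeff0; case: ifP. Qed.

Lemma pic_sum w D (I : Type) (r : seq I) (P : pred I) (F : I -> {mpoly K[n]}) :
  pic w D (\sum_(i <- r | P i) F i) = \sum_(i <- r | P i) pic w D (F i).
Proof. exact: (big_morph _ (picD w D) (pic0 w D)). Qed.

Lemma picX w D c m :
  pic w D (c *: 'X_[m]) = if wdeg w m == D then c *: 'X_[m] else 0.
Proof.
apply/mpolyP => m'; rewrite mcoeff_pic mcoeffZ mcoeffX.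
case: (m =P m') => [<-|ne]; case: (wdeg w m =P D) => h.
all: try by rewrite ?mcoeff0 ?mcoeffZ ?mcoeffX ?eqxx ?mulr0 ?mulr1.
all: rewrite ?mulr0 ?mcoeff0 ?mcoeffZ ?mcoeffX; try by case: ifP.
all: by case: (m =P m') => //; rewrite mulr0; case: ifP.
Qed.

Lemma wdegD w m1 m2 : wdeg w (m1 + m2) = (wdeg w m1 + wdeg w m2)%N.
Proof. by rewrite /wdeg -big_split; apply: eq_bigr => i _; rewrite mnmDE mulnDl. Qed.

Lemma wdeg0 w : wdeg w 0%MM = 0%N.
Proof. by rewrite /wdeg big1 // => i _; rewrite mnm0E. Qed.

Lemma wdegU w i : wdeg w U_(i)%MM = w i.
Proof.
rewrite /wdeg (bigD1 i) //= mnm1E eqxx mul1n big1 ?addn0 //.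
by move=> j /negbTE ne; rewrite mnm1E eq_sym ne.
Qed.

Definition wbnd w D p := forall m, m \in msupp p -> (wdeg w m <= D)%N.
Definition whom w D p := forall m, m \in msupp p -> wdeg w m = D.

Lemma msuppM p q m : m \in msupp (p * q) ->
  exists m1 m2, [/\ m1 \in msupp p, m2 \in msupp q & m = (m1 + m2)%MM].
Proof.
move/msuppM_le/allpairsP => [[m1 m2] /= [h1 h2 ->]]; by exists m1, m2.
Qed.

Lemma wbndM w a b p q : wbnd w a p -> wbnd w b q -> wbnd w (a + b) (p * q).
Proof.
move=> hp hq m /msuppM [m1 [m2 [h1 h2 ->]]]; rewrite wdegD.
exact: leq_add (hp _ h1) (hq _ h2).
Qed.

Lemma whomM w a b p q : whom w a p -> whom w b q -> whom w (a + b) (p * q).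
Proof.
move=> hp hq m /msuppM [m1 [m2 [h1 h2 ->]]]; by rewrite wdegD hp // hq.
Qed.

Lemma wbndD w a p q : wbnd w a p -> wbnd w a q -> wbnd w a (p + q).
Proof.
move=> hp hq m /msuppD_le; rewrite mem_cat => /orP [] h; [exact: hp|exact: hq].
Qed.

Lemma wbnd0 w a : wbnd w a 0.
Proof. by move=> m; rewrite msupp0. Qed.

Lemma wbndZ w a c p : wbnd w a p -> wbnd w a (c *: p).
Proof. by move=> hp m /msuppZ_le /hp. Qed.

Lemma wbndN w a p : wbnd w a p -> wbnd w a (- p).
Proof. by move=> hp m; rewrite (perm_mem (msuppN p)) => /hp. Qed.

Lemma wbnd_sum w a (I : Type) (r : seq I) (P : pred I) (F : I -> {mpoly K[n]}) :
  (forall i, P i -> wbnd w a (F i)) -> wbnd w a (\sum_(i <- r | P i) F i).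
Proof.
move=> h; elim/big_rec: _ => [|i x Pi hx]; [exact: wbnd0|exact: wbndD (h _ Pi) hx].
Qed.

Lemma wbndW w a b p : (a <= b)%N -> wbnd w a p -> wbnd w b p.
Proof. by move=> ab hp m /hp /leq_trans; apply. Qed.

Lemma wbnd1 w : wbnd w 0 1.
Proof. by move=> m; rewrite msupp1 inE => /eqP ->; rewrite wdeg0. Qed.

Lemma whom_pic w D p : whom w D (pic w D p).
Proof.
by move=> m; rewrite mcoeff_msupp mcoeff_pic; case: (wdeg w m =P D) => [//|_]; rewrite eqxx.
Qed.

Lemma pic_whom w D p : whom w D p -> pic w D p = p.
Proof.
move=> h; apply/mpolyP => m; rewrite mcoeff_pic.
case: (boolP (m \in msupp p)) => [/h -> | /memN_msupp_eq0 ->]; first by rewrite eqxx.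
by case: ifP.
Qed.

Lemma pic_gt w D E p : wbnd w D p -> (D < E)%N -> pic w E p = 0.
Proof.
move=> h lt; apply/mpolyP => m; rewrite mcoeff_pic mcoeff0.
case: (boolP (m \in msupp p)) => [/h le | /memN_msupp_eq0 ->]; last by case: ifP.
case: eqP => // Em; move: le; rewrite Em => le.
by move: (leq_ltn_trans le lt); rewrite ltnn.
Qed.

Lemma picM w a b p q : wbnd w a p -> wbnd w b q ->
  pic w (a + b) (p * q) = pic w a p * pic w b q.
Proof.
move=> hp hq.
have Ep := mpolyE p; have Eq := mpolyE q.
rewrite [in LHS]Ep [in LHS]Eq [in RHS]Ep [in RHS]Eq mulr_suml pic_sum !pic_sum mulr_suml.
apply: eq_big_seq => m1 h1.
rewrite mulr_sumr pic_sum mulr_sumr; apply: eq_big_seq => m2 h2.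
rewrite -scalerAl -scalerAr scalerA -mpolyXD !picX wdegD.
have l1 := hp _ h1; have l2 := hq _ h2.
case: (wdeg w m1 =P a) => [->|n1]; case: (wdeg w m2 =P b) => [->|n2];
  rewrite ?eqxx ?mul0r ?mulr0 //.
- by rewrite -scalerAl -scalerAr scalerA mpolyXD.
- case: eqP => // E; exfalso; apply: n2; lia.
- case: eqP => // E; exfalso; apply: n1; lia.
- case: eqP => // E; exfalso; apply: n1; lia.
Qed.

End Weighted.

Section Degrees.
Variables (n : nat) (K : fieldType).
Implicit Types (p q : {mpoly K[n]}) (w : 'I_n -> nat).
Local Notation w1 := (fun _ : 'I_n => 1%N).

Lemma wdeg1 m : wdeg w1 m = mdeg m.
Proof. by rewrite /wdeg mdegE; apply: eq_bigr => i _; rewrite muln1. Qed.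



Lemma mpoly_neq0P p : p != 0 -> exists m, m \in msupp p.
Proof.
move=> nz; case E: (msupp p) => [|m s]; last by exists m; rewrite inE eqxx.
by move/eqP: E; rewrite msupp_eq0 (negbTE nz).
Qed.

Lemma deg1_wbnd p : wbnd w1 (deg1 p) p.
Proof.
move=> m /msize_mdeg_lt; rewrite wdeg1 /deg1; case: (msize p) => //.
Qed.

Lemma wbnd_deg1 D p : wbnd w1 D p -> (deg1 p <= D)%N.
Proof.
move=> h; rewrite /deg1 msizeE.
suff : (\max_(m <- msupp p) (mdeg m).+1 <= D.+1)%N by case: (\max_(_ <- _) _).
apply/bigmax_leqP_seq => m hm _; rewrite ltnS -wdeg1; exact: h.
Qed.

Lemma pic_neq0 w D p : pic w D p != 0 -> exists m, m \in msupp p /\ wdeg w m = D.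
Proof.
move/mpoly_neq0P => [m]; rewrite mcoeff_msupp mcoeff_pic.
by case: (wdeg w m =P D) => [E|_]; rewrite ?eqxx // => h; exists m; rewrite mcoeff_msupp.
Qed.

Lemma deg1_ge D p : pic w1 D p != 0 -> (D <= deg1 p)%N.
Proof.
move/pic_neq0 => [m [hm <-]]; rewrite wdeg1; move/msize_mdeg_lt: hm.
by rewrite /deg1; case: (msize p).
Qed.

Lemma wbnd_wdegp w p : wbnd w (wdegp w p) p.
Proof. by move=> m hm; rewrite /wdegp; exact: (leq_bigmax_seq m hm). Qed.

Lemma wdegp_le w D p : wbnd w D p -> (wdegp w p <= D)%N.
Proof. by move=> h; apply/bigmax_leqP_seq => m hm _; exact: h. Qed.

Lemma wdegp_ge w D p : pic w D p != 0 -> (D <= wdegp w p)%N.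
Proof.
move/pic_neq0 => [m [hm <-]]; rewrite /wdegp; exact: (leq_bigmax_seq m hm).
Qed.

Lemma wtopE w p : wtop w p = pic w (wdegp w p) p.
Proof. by []. Qed.

Lemma hbarE p : hbar p = pic w1 (deg1 p) p.
Proof. by apply: eq_bigl => m; rewrite wdeg1. Qed.

Lemma wtop_neq0 w p : p != 0 -> wtop w p != 0.
Proof.
move=> nz.
have [m [hm E]] : exists m, m \in msupp p /\ wdeg w m = wdegp w p.
  rewrite /wdegp; move/mpoly_neq0P: nz => [m0 h0].
  elim: (msupp p) m0 h0 => [|x s IH] // m0; rewrite inE big_cons => /orP [/eqP <-|h].
    case: (leqP (\max_(j <- s) wdeg w j) (wdeg w m0)) => le.
      by exists m0; rewrite inE eqxx.
    case: s IH le => [|y s] IH le; first by rewrite big_nil in le.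
    have [m1 [h1 E1]] := IH y (mem_head y s).
    by exists m1; rewrite inE h1 orbT E1.
  have [m1 [h1 E1]] := IH m0 h.
  case: (leqP (\max_(j <- s) wdeg w j) (wdeg w x)) => le.
    by exists x; rewrite inE eqxx.
  by exists m1; rewrite inE h1 orbT E1.
apply/negP => /eqP /mpolyP /(_ m); rewrite wtopE mcoeff_pic E eqxx mcoeff0 => /eqP.
by rewrite mcoeff_eq0 hm.
Qed.

Lemma powM w a e p : wbnd w a p ->
  wbnd w (a * e) (p ^+ e) /\ pic w (a * e) (p ^+ e) = (pic w a p) ^+ e.
Proof.
move=> h; elim: e => [|e [IH1 IH2]].
  by rewrite muln0 !expr0; split; [exact: wbnd1|by apply: pic_whom => m; rewrite msupp1 inE => /eqP ->; rewrite wdeg0].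
rewrite mulnS !exprS; split; first exact: wbndM.
by rewrite picM // IH2.
Qed.

Lemma prodM w (I : Type) (r : seq I) (F : I -> {mpoly K[n]}) (b : I -> nat) :
  (forall i, wbnd w (b i) (F i)) ->
  wbnd w (\sum_(i <- r) b i) (\prod_(i <- r) F i) /\
  pic w (\sum_(i <- r) b i) (\prod_(i <- r) F i) = \prod_(i <- r) pic w (b i) (F i).
Proof.
move=> h; elim: r => [|i r [IH1 IH2]].
  rewrite !big_nil; split; [exact: wbnd1|by apply: pic_whom => m; rewrite msupp1 inE => /eqP ->; rewrite wdeg0].
by rewrite !big_cons; split; [exact: wbndM|rewrite picM // IH2].
Qed.

End Degrees.

Section Comp.
Variables (n : nat) (K : fieldType) (Phi : n.-tuple {mpoly K[n]}).
Implicit Types (p q Q : {mpoly K[n]}).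
Local Notation w1 := (fun _ : 'I_n => 1%N).
Local Notation d := (fun i : 'I_n => deg1 (tnth Phi i)).
Local Notation H := [tuple hbar (tnth Phi i) | i < n].

Lemma mono_comp m :
  wbnd w1 (wdeg d m) ('X_[m] \mPo Phi) /\
  pic w1 (wdeg d m) ('X_[m] \mPo Phi) = 'X_[m] \mPo H.
Proof.
have E : wdeg d m = (\sum_(i < n) (d i * m i))%N.
  by apply: eq_bigr => i _; rewrite mulnC.
rewrite E !comp_mpolyX.
have [h1 h2] := @prodM _ _ w1 _ (index_enum 'I_n) (fun i => tnth Phi i ^+ m i)
   (fun i => deg1 (tnth Phi i) * m i)%N
   (fun i => (powM (m i) (@deg1_wbnd _ _ (tnth Phi i))).1).
split; first exact: h1.
rewrite h2; apply: eq_bigr => i _.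
by rewrite (powM (m i) (@deg1_wbnd _ _ (tnth Phi i))).2 tnth_mktuple hbarE.
Qed.

Lemma comp_bound Q : wbnd w1 (wdegp d Q) (Q \mPo Phi).
Proof.
rewrite comp_mpolyEX big_seq; apply: wbnd_sum => m hm; apply: wbndZ.
apply: wbndW (mono_comp m).1; exact: wbnd_wdegp.
Qed.

Lemma comp_top Q : pic w1 (wdegp d Q) (Q \mPo Phi) = wtop d Q \mPo H.
Proof.
rewrite comp_mpolyEX pic_sum /wtop raddf_sum /= [RHS]big_mkcond /=.
apply: eq_big_seq => m hm; rewrite picZ.
have le := wbnd_wdegp d hm.
case: eqP => [E|ne].
  by rewrite -{1}E (mono_comp m).2 comp_mpolyZ.
rewrite (pic_gt (mono_comp m).1) ?scaler0 //.
by rewrite ltn_neqAle le andbT; apply/eqP.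
Qed.

Lemma comp_deg Q : wtop d Q \mPo H != 0 -> deg1 (Q \mPo Phi) = wdegp d Q.
Proof.
rewrite -comp_top => nz; apply/eqP; rewrite eqn_leq deg1_ge // andbT.
exact: wbnd_deg1 (comp_bound (Q := Q)).
Qed.

End Comp.

Section Deriv.
Variables (n : nat) (K : fieldType) (w : 'I_n -> nat) (i : 'I_n).
Implicit Types (p q : {mpoly K[n]}).

Lemma deriv_pic D p : (pic w (D + w i) p)^`M(i) = pic w D (p^`M(i)).
Proof.
apply/mpolyP => m; rewrite mcoeff_deriv !mcoeff_pic mcoeff_deriv wdegD wdegU eqn_add2r.
by case: ifP; rewrite ?mul0rn.
Qed.

Lemma deriv_pic_lt D p : (D < w i)%N -> (pic w D p)^`M(i) = 0.
Proof.
move=> lt; apply/mpolyP => m; rewrite mcoeff_deriv !mcoeff_pic mcoeff0 wdegD wdegU.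
case: eqP => [E|_]; last by rewrite mul0rn.
by move: lt; rewrite -E ltnNge leq_addl.
Qed.

Lemma msupp_deriv p m : m \in msupp (p^`M(i)) -> (m + U_(i))%MM \in msupp p.
Proof.
rewrite !mcoeff_msupp mcoeff_deriv; apply: contra => /eqP ->; by rewrite mul0rn.
Qed.

Lemma wbnd_deriv D p : wbnd w (D + w i) p -> wbnd w D (p^`M(i)).
Proof.
move=> h m /msupp_deriv /h; by rewrite wdegD wdegU leq_add2r.
Qed.

Lemma deriv_pic_k k D p : (pic w (D + k * w i) p)^`M(i, k) = pic w D (p^`M(i, k)).
Proof.
elim: k D p => [|k IH] D p; first by rewrite mul0n addn0 !mderivn0.
rewrite !mderivSn (_ : (D + k.+1 * w i = (D + k * w i) + w i)%N); last by rewrite mulSn; lia.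
rewrite deriv_pic; exact: IH.
Qed.

Lemma wbnd_deriv_k k D p : wbnd w (D + k * w i) p -> wbnd w D (p^`M(i, k)).
Proof.
elim: k D p => [|k IH] D p; first by rewrite mul0n addn0 mderivn0.
rewrite mderivSn (_ : (D + k.+1 * w i = (D + k * w i) + w i)%N); last by rewrite mulSn; lia.
move=> h; apply: IH; exact: wbnd_deriv.
Qed.

Lemma deriv_pic_lt_k k D p : (D < k * w i)%N -> (pic w D p)^`M(i, k) = 0.
Proof.
elim: k D p => [|k IH] D p //; rewrite mderivSn.
case: (ltnP D (w i)) => lt1 lt2.
  by rewrite deriv_pic_lt // linear0.
rewrite -(subnK lt1) deriv_pic; apply: IH.
move: lt2; rewrite mulSn; lia.
Qed.

Lemma msupp_deriv_mdeg p m : m \in msupp (p^`M(i)) -> ((mdeg m).+2 <= msize p)%N.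
Proof.
move/msupp_deriv/msize_mdeg_lt; by rewrite mdegD mdeg1 addn1.
Qed.

Lemma msize_deriv p : (msize (p^`M(i)) <= (msize p).-1)%N.
Proof.
rewrite [X in (X <= _)%N]msizeE; apply/bigmax_leqP_seq => m hm _.
move: (msupp_deriv_mdeg hm); by case: (msize p).
Qed.

Lemma deriv_wbnd1 p : wbnd (fun=> 1%N) (deg1 p).-1 (p^`M(i)).
Proof.
move=> m /msupp_deriv_mdeg; rewrite wdeg1 /deg1.
by case: (msize p) => [|[|s]].
Qed.

End Deriv.

Lemma aux1 (T : comRingType) (R D : T) a :
  D * (R * R ^+ a) + R * (R ^+ a * D *+ a.+1) = R * R ^+ a * D *+ a.+2.
Proof. ring. Qed.

Lemma aux2 (T : comRingType) (R D S U W : T) a j c :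
  R ^+ a * D *+ a.+1 * (D ^+ j * S *+ c + R * U) + R ^+ a.+1 * W =
  R ^+ a * (D ^+ j.+1 * S *+ (c * a.+1) + R * (D * U *+ a.+1 + W)).
Proof.
have -> : D ^+ j.+1 * S *+ (c * a.+1) = (D * (D ^+ j * S *+ c)) *+ a.+1.
  by rewrite mulrnA exprS -mulrA mulrnAr.
rewrite exprS.
move: (D ^+ j * S *+ c) (R ^+ a) => Y Ra.
rewrite -[Ra * D *+ _]mulr_natr -[D * Y *+ _]mulr_natr -[D * U *+ _]mulr_natr.
move: (a.+1%:R : T) => A; ring.
Qed.

Section Alg.
Variables (n : nat) (K : fieldType) (i : 'I_n).
Implicit Types (p q R S : {mpoly K[n]}).

Lemma deriv_exp R a : (R ^+ a.+1)^`M(i) = (R ^+ a * R^`M(i)) *+ a.+1.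
Proof.
elim: a => [|a IH]; first by rewrite expr1 expr0 mul1r.
rewrite exprS mderivM IH exprS; exact: aux1.
Qed.

Lemma deriv_step R S j a : exists c, (c != 0)%N /\ exists U,
  (R ^+ (a + j) * S)^`M(i, j) = R ^+ a * ((R^`M(i)) ^+ j * S *+ c + R * U).
Proof.
elim: j a => [|j IH] a.
  by exists 1%N; split => //; exists 0; rewrite mderivn0 addn0 mulr0 addr0 expr0 mul1r.
have [c [nz [U E]]] := IH a.+1.
exists (c * a.+1)%N; split; first by rewrite muln_eq0 negb_or nz.
exists ((R^`M(i) * U) *+ a.+1 + ((R^`M(i)) ^+ j * S *+ c + R * U)^`M(i)).
rewrite mderivnS -addSnnS E mderivM deriv_exp; exact: aux2.
Qed.

Lemma pideal_scale R X c : [pchar K] =i pred0 -> (c != 0)%N ->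
  in_pideal R (X *+ c) -> in_pideal R X.
Proof.
move=> ch nz [S E]; exists ((c%:R : K)^-1 *: S).
have nzc : (c%:R : K) != 0 by move/pcharf0P: ch => ->.
by rewrite -scalerAr -E -scaler_nat scalerA mulVf // scale1r.
Qed.

Lemma pideal_sub R X Y : in_pideal R (X + R * Y) -> in_pideal R X.
Proof. by move=> [S E]; exists (S - Y); rewrite mulrBr -E addrK. Qed.

Lemma pideal_pow R S0 A B k :
  (forall A B, in_pideal R (A * B) -> in_pideal R A \/ in_pideal R B) ->
  in_pideal R (A ^+ k * B) -> in_pideal R A \/ in_pideal R B.
Proof.
move=> pr; elim: k => [|k IH]; first by rewrite expr0 mul1r; right.
rewrite exprS -mulrA => /pr [] //; by left.
Qed.

Lemma not_div_deriv R : (1 < msize R)%N -> R^`M(i) != 0 -> ~ in_pideal R (R^`M(i)).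
Proof.
move=> sz nz [S E].
have nzS : S != 0 by apply: contraNneq nz => S0; rewrite E S0 mulr0.
have nzR : R != 0 by apply: contraTneq sz => ->; rewrite msize0.
have := msize_deriv i R; rewrite E msizeM //.
have : (0 < msize S)%N by rewrite lt0n msize_poly_eq0.
move: sz; rewrite -!subn1.
set a := mmeasure mdeg R; set b := mmeasure mdeg S. lia.
Qed.

End Alg.

Lemma aux3 (T : comRingType) (A B a b f : T) :
  (a * f) * B + A * (b * f) = (a * B + A * b) * f.
Proof. ring. Qed.

Section Chain.
Variables (n : nat) (K : fieldType) (F : n.-tuple {mpoly K[n]}).
Implicit Types (p q A B Q : {mpoly K[n]}).

Definition CR j Q := (Q \mPo F)^`M(j) = \sum_(l < n) ((Q^`M(l)) \mPo F) * (tnth F l)^`M(j).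

Lemma CR0 j : CR j 0.
Proof. by rewrite /CR comp_mpoly0 mderiv0 big1 // => l _; rewrite mderiv0 comp_mpoly0 mul0r. Qed.

Lemma CRD j A B : CR j A -> CR j B -> CR j (A + B).
Proof.
rewrite /CR => hA hB; rewrite comp_mpolyD mderivD hA hB -big_split /=.
by apply: eq_bigr => l _; rewrite mderivD comp_mpolyD mulrDl.
Qed.

Lemma CRZ j c A : CR j A -> CR j (c *: A).
Proof.
rewrite /CR => hA; rewrite comp_mpolyZ mderivZ hA scaler_sumr.
by apply: eq_bigr => l _; rewrite mderivZ comp_mpolyZ scalerAl.
Qed.

Lemma CR1 j : CR j 1.
Proof.
rewrite /CR comp_mpoly1 -mpolyX0 mderivX mnm0E scale0r big1 // => l _.
by rewrite mderivX mnm0E scale0r comp_mpoly0 mul0r.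
Qed.

Lemma CRM j A B : CR j A -> CR j B -> CR j (A * B).
Proof.
rewrite /CR => hA hB; rewrite rmorphM mderivM hA hB mulr_suml mulr_sumr -big_split /=.
apply: eq_bigr => l _; rewrite mderivM comp_mpolyD !rmorphM; exact: aux3.
Qed.

Lemma CRX j l : CR j 'X_l.
Proof.
have E0 : (U_(l) - U_(l))%MM = 0%MM by apply/mnmP => k; rewrite mnmBE subnn mnm0E.
rewrite /CR comp_mpolyXU (bigD1 l) //= mderivX mnm1E eqxx E0 mpolyX0 scale1r.
rewrite comp_mpoly1 mul1r big1 ?addr0; first by rewrite -tnth_nth.
move=> l' /negbTE ne; rewrite mderivX mnm1E eq_sym ne scale0r comp_mpoly0 mul0r //.
Qed.

Lemma chain_rule j Q : CR j Q.
Proof.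
rewrite [Q]mpolyE; elim/big_ind: _ => [|A B|m _]; [exact: CR0|exact: CRD|].
apply: CRZ; rewrite mpolyXE_id; elim/big_ind: _ => [|A B|i _]; [exact: CR1|exact: CRM|].
elim: (m i) => [|e IH]; first by rewrite expr0; exact: CR1.
by rewrite exprS; apply: CRM => //; exact: CRX.
Qed.

Lemma chainE j Q :
  (Q \mPo F)^`M(j) = \sum_(l < n) ((Q^`M(l)) \mPo F) * (tnth F l)^`M(j).
Proof. exact: chain_rule. Qed.

End Chain.

Lemma det_row0 (T : comRingType) m (A : 'M[T]_m) i : (forall j, A i j = 0) -> \det A = 0.
Proof. by move=> h; rewrite (expand_det_row A i) big1 // => j _; rewrite h mul0r. Qed.

Section Jac.
Variables (n : nat) (K : fieldType).
Implicit Types (p q Q : {mpoly K[n]}).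

Definition jac (F : n.-tuple {mpoly K[n]}) : 'M[{mpoly K[n]}]_n :=
  \matrix_(i, j) (tnth F i)^`M(j).

Lemma derivXU (i j : 'I_n) : ('X_i : {mpoly K[n]})^`M(j) = (i == j)%:R.
Proof.
rewrite mderivX mnm1E; case: (i =P j) => [->|_]; last by rewrite scale0r.
have E0 : (U_(j) - U_(j))%MM = 0%MM by apply/mnmP => k; rewrite mnmBE subnn mnm0E.
by rewrite E0 mpolyX0 scale1r.
Qed.

Lemma jac_inv (F G : n.-tuple {mpoly K[n]}) :
  (forall i, tnth G i \mPo F = 'X_i) ->
  (\matrix_(i, l) ((tnth G i)^`M(l) \mPo F)) *m jac F = 1%:M.
Proof.
move=> h; apply/matrixP => i j; rewrite !mxE.
rewrite (eq_bigr (fun l => ((tnth G i)^`M(l) \mPo F) * (tnth F l)^`M(j))); last first.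
  by move=> l _; rewrite !mxE.
by rewrite -chain_rule h derivXU.
Qed.

Lemma det_jac_neq0 (F G : n.-tuple {mpoly K[n]}) :
  (forall i, tnth G i \mPo F = 'X_i) -> \det (jac F) != 0.
Proof.
move=> h; apply/eqP => E.
have := congr1 determinant (jac_inv h); rewrite det_mulmx E mulr0 det1 => /eqP.
by rewrite eq_sym oner_eq0.
Qed.

End Jac.

Lemma deriv_const (n : nat) (K : fieldType) (p : {mpoly K[n]}) j :
  deg1 p = 0%N -> p^`M(j) = 0.
Proof.
move=> h; apply/eqP; rewrite -msize_poly_eq0 -leqn0.
by apply: leq_trans (msize_deriv j p) _; move: h; rewrite /deg1 => ->.
Qed.

Lemma deg1_mul_le (n : nat) (K : fieldType) (a J : {mpoly K[n]}) :
  J != 0 -> (deg1 a <= deg1 (a * J))%N.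
Proof.
move=> nzJ; case: (eqVneq a 0) => [->|nza]; first by rewrite /deg1 msize0.
rewrite /deg1 msizeM //.
have : (0 < msize J)%N by rewrite lt0n msize_poly_eq0.
move: (msize a) (msize J) => x y; lia.
Qed.

Lemma wbnd_sign (n : nat) (K : fieldType) w a (x : {mpoly K[n]}) (b : bool) :
  wbnd w a x -> wbnd w a ((-1) ^+ b * x).
Proof. by case: b => h; rewrite ?expr1 ?expr0 ?mulN1r ?mul1r //; apply: wbndN. Qed.

Lemma prodM_ord (n m : nat) (K : fieldType) w (F : 'I_m -> {mpoly K[n]}) (b : 'I_m -> nat) :
  (forall i, wbnd w (b i) (F i)) -> wbnd w (\sum_i b i) (\prod_i F i).
Proof. by move=> h; exact: (prodM _ h).1. Qed.

Section JL.
Variables (n : nat) (K : fieldType) (Phi Psi : n.+1.-tuple {mpoly K[n.+1]}).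
Hypothesis hPsi : forall i, tnth Psi i \mPo Phi = 'X_i.
Local Notation d := (fun i : 'I_n.+1 => deg1 (tnth Phi i)).
Local Notation mx := (@ord_max n).
Implicit Types (Q : {mpoly K[n.+1]}).

Lemma d_pos i : (0 < d i)%N.
Proof.
rewrite lt0n; apply/negP => /eqP h.
have := det_jac_neq0 hPsi; rewrite (det_row0 (i := i)) ?eqxx // => j.
by rewrite mxE deriv_const.
Qed.

Lemma det_key Q : let G := Q \mPo Phi in
  \det (\matrix_(i, j) (if i == mx then G^`M(j) else (tnth Phi i)^`M(j)))
  = ((Q^`M(mx)) \mPo Phi) * \det (jac Phi).
Proof.
move=> G.
set B := \matrix_(i, l) (if i == mx then (Q^`M(l)) \mPo Phi else (i == l)%:R)
  : 'M[{mpoly K[n.+1]}]_n.+1.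
have -> : \matrix_(i, j) (if i == mx then G^`M(j) else (tnth Phi i)^`M(j)) = B *m jac Phi.
  apply/matrixP => i j; rewrite !mxE /B.
  under eq_bigr do rewrite !mxE.
  case: (i == mx); first by rewrite /G chainE.
  rewrite (bigD1 i) //= eqxx mul1r big1 ?addr0 // => l /negbTE ne.
  by rewrite eq_sym ne mul0r.
rewrite det_mulmx; congr (_ * _).
rewrite det_trig; last first.
  apply/is_trig_mxP => i j lt; rewrite mxE.
  have -> : (i == mx) = false.
    apply/negbTE; apply/eqP => E; move: lt; rewrite E /=.
    by move: (ltn_ord j); rewrite ltnS => /leq_ltn_trans h /h; rewrite ltnn.
  by case: eqP => // E; move: lt; rewrite E ltnn.
rewrite (bigD1 mx) //= mxE eqxx big1 ?mulr1 // => i /negbTE ne.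
by rewrite mxE ne eqxx.
Qed.

Lemma JL Q : (Q^`M(mx)) \mPo Phi != 0 ->
  (0 < deg1 (Q \mPo Phi))%N /\
  (deg1 ((Q^`M(mx)) \mPo Phi) + d mx + n.+1 <= deg1 (Q \mPo Phi) + \sum_i d i)%N.
Proof.
move=> nz.
have hJ := det_jac_neq0 hPsi.
have hk := det_key Q; simpl in hk.
have Gpos : (0 < deg1 (Q \mPo Phi))%N.
  rewrite lt0n; apply/negP => /eqP h0.
  move: hk; rewrite (det_row0 (i := mx)
    (A := \matrix_(i, j) (if i == mx then (Q \mPo Phi)^`M(j) else (tnth Phi i)^`M(j)))); last first.
    by move=> j; rewrite mxE eqxx deriv_const.
  move/esym/eqP; rewrite mulf_eq0 (negbTE hJ) orbF; exact/negP.
split => //.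
set e := fun i : 'I_n.+1 => (if i == mx then deg1 (Q \mPo Phi) else d i).-1.
have hb : wbnd (fun=> 1%N) (\sum_i e i)
  (\det (\matrix_(i, j) (if i == mx then (Q \mPo Phi)^`M(j) else (tnth Phi i)^`M(j)))).
  rewrite /determinant; apply: wbnd_sum => s _; apply: wbnd_sign.
  apply: prodM_ord => i; rewrite mxE /e; case: (i == mx); exact: deriv_wbnd1.
have h1 := wbnd_deg1 hb; rewrite hk in h1.
have h2 := leq_trans (deg1_mul_le _ hJ) h1.
have h3 : (\sum_i e i + n.+1 = \sum_i (if i == mx then deg1 (Q \mPo Phi) else d i))%N.
  transitivity (\sum_(i < n.+1) (e i + 1))%N.
    by rewrite big_split /= sum1_card card_ord.
  apply: eq_bigr => i _; rewrite /e.
  case: (i == mx); rewrite addn1 prednK //; exact: d_pos.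
have h4 : (\sum_i (if i == mx then deg1 (Q \mPo Phi) else d i) + d mx = deg1 (Q \mPo Phi) + \sum_i d i)%N.
  rewrite (bigD1 mx) //= eqxx [in RHS](bigD1 mx) //=.
  rewrite (eq_bigr (fun i => d i)); last by move=> i /negbTE ->.
  lia.
lia.
Qed.

End JL.

Lemma wdegpM_ge (n : nat) (K : fieldType) w (p q : {mpoly K[n]}) :
  p != 0 -> q != 0 -> (wdegp w p + wdegp w q <= wdegp w (p * q))%N.
Proof.
move=> np nq; apply: wdegp_ge.
rewrite picM; [|exact: wbnd_wdegp|exact: wbnd_wdegp].
apply: mulf_neq0; exact: wtop_neq0.
Qed.

Lemma wdegp_pow_ge (n : nat) (K : fieldType) w (R S : {mpoly K[n]}) k :
  R != 0 -> S != 0 -> (k * wdegp w R + wdegp w S <= wdegp w (R ^+ k * S))%N.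
Proof.
move=> nR nS; elim: k => [|k IH]; first by rewrite mul0n add0n expr0 mul1r.
rewrite exprS -mulrA; apply: leq_trans (wdegpM_ge _ _ _) => //.
  by rewrite mulSn -addnA leq_add2l.
by rewrite mulf_neq0 // expf_neq0.
Qed.

Lemma wdegp_wtop_le (n : nat) (K : fieldType) w (p : {mpoly K[n]}) :
  (wdegp w (wtop w p) <= wdegp w p)%N.
Proof.
apply: wdegp_le => m; rewrite wtopE mcoeff_msupp mcoeff_pic.
case: (wdeg w m =P wdegp w p) => [E|_]; last by rewrite eqxx.
by rewrite E.
Qed.

Lemma ar1 (a b c dm N u X Y : nat) :
  (a + Y <= b + X)%N -> (b + dm + N <= c + u)%N -> (a + (dm + N + Y) <= c + (u + X))%N.
Proof. lia. Qed.

Lemma ar2 (e g k dm N u : nat) : (e + k * (dm + N) <= g + k * u)%N ->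
  ((e + k * dm)%N%:Z - k%:Z * (u%:Z - N%:Z) <= g%:Z).
Proof.
move=> h; rewrite mulrBr -!PoszM; rewrite mulnDr in h; move: h.
move: (k * dm)%N (k * N)%N (k * u)%N => x y z h; lia.
Qed.

Lemma ar3 (g D0 wR k : nat) (nb : int) :
  (D0%:Z - k%:Z * nb <= g%:Z) -> (k * wR <= D0)%N -> k%:Z * (wR%:Z - nb) <= g%:Z.
Proof.
rewrite mulrBr -PoszM; move: (k%:Z * nb) (k * wR)%N => x y; lia.
Qed.

Theorem proposition1 (K : closedFieldType) (n : nat)
    (Phi : (n.+1).-tuple {mpoly K[n.+1]}) (R P : {mpoly K[n.+1]}) (k : nat) :
  [pchar K] =i pred0 ->
  poly_automorphism Phi ->
  let d := fun i : 'I_n.+1 => deg1 (tnth Phi i) in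
  let nabla : int := (\sum_(i < n.+1) d i)%N%:Z - (n.+1)%:Z in
  (forall Q : {mpoly K[n.+1]},
     Q \mPo [tuple hbar (tnth Phi i) | i < n.+1] = 0 <-> in_pideal R Q) ->
  mirreducible R ->
  R^`M(ord_max) != 0 ->
  P != 0 ->
  in_pideal (R ^+ k) (wtop d P) ->
  ~ in_pideal (R ^+ k.+1) (wtop d P) ->
  [/\ deg1 (P^`M(ord_max, k) \mPo Phi) = wdegp d (P^`M(ord_max, k))
        /\ (wdegp d (P^`M(ord_max, k)) : int) = (wdegp d P)%:Z - (k * d ord_max)%N%:Z,
      (deg1 (P \mPo Phi))%:Z >= (wdegp d P)%:Z - k%:Z * nabla
    & (deg1 (P \mPo Phi))%:Z >= k%:Z * ((wdegp d R)%:Z - nabla)].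
Proof.
move=> ch [Psi [_ hPsi]] d nabla hI [hR _] hRd hP [S ES] hk1.
set H := [tuple hbar (tnth Phi i) | i < n.+1].
set mx := @ord_max n.
have prime : forall A B, in_pideal R (A * B) -> in_pideal R A \/ in_pideal R B.
  move=> A B /(hI _).2; rewrite rmorphM => /eqP; rewrite mulf_eq0 => /orP [] /eqP /hI;
  by [left|right].
have nS : ~ in_pideal R S.
  move=> [S' E]; apply: hk1; exists S'; by rewrite ES E exprSr mulrA.
set T := (wtop d P)^`M(mx, k).
have notT : ~ in_pideal R T.
  have [c [nzc [U EU]]] := deriv_step mx R S k 0.
  rewrite add0n expr0 mul1r in EU.
  rewrite /T ES EU => /pideal_sub /(pideal_scale ch nzc).
  move=> /(pideal_pow S prime) [].
    exact: not_div_deriv hR hRd.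
  exact: nS.
have nTH : T \mPo H != 0 by apply/eqP => /hI.
have nT : T != 0 by apply: contraNneq nTH => ->; rewrite comp_mpoly0.
set D0 := wdegp d P.
have hge : (k * d mx <= D0)%N.
  rewrite leqNgt; apply/negP => lt; case/negP: nT.
  by rewrite /T wtopE deriv_pic_lt_k.
set E := (D0 - k * d mx)%N.
have hD0 : D0 = (E + k * d mx)%N by rewrite subnK.
have hpic : pic d E (P^`M(mx, k)) = T.
  by rewrite /T wtopE -/D0 hD0 deriv_pic_k.
have hwb : wbnd d E (P^`M(mx, k)).
  apply: wbnd_deriv_k; rewrite -hD0; exact: wbnd_wdegp.
have hwd : wdegp d (P^`M(mx, k)) = E.
  apply/eqP; rewrite eqn_leq wdegp_le //=; apply: wdegp_ge; by rewrite hpic.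
have htop : wtop d (P^`M(mx, k)) = T by rewrite wtopE hwd.
have h1 : deg1 (P^`M(mx, k) \mPo Phi) = wdegp d (P^`M(mx, k)).
  by apply: comp_deg; rewrite htop.
have nzk : P^`M(mx, k) \mPo Phi != 0.
  apply: contraNneq nTH => h0.
  by rewrite -htop -(comp_top Phi) h0 pic0.
have claim : forall t, (t <= k)%N ->
  P^`M(mx, k - t) \mPo Phi != 0 /\
  (deg1 (P^`M(mx, k) \mPo Phi) + t * (d mx + n.+1) <=
     deg1 (P^`M(mx, k - t) \mPo Phi) + t * \sum_i d i)%N.
  elim => [|t IH] lt; first by rewrite subn0 !mul0n !addn0.
  have [IH1 IH2] := IH (ltnW lt).
  have Ej : (k - t = (k - t.+1).+1)%N by lia.
  rewrite Ej mderivnS in IH1.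
  have [pos J] := JL hPsi IH1.
  split.
    by apply: contraTneq pos => ->; rewrite /deg1 msize0.
  rewrite Ej mderivnS in IH2.
  move: IH2 J; rewrite !mulSn => h1' h2'; exact: ar1 h1' h2'.
have [_ C] := claim k (leqnn k).
move: C; rewrite subnn mderivn0 h1 hwd => C.
have h2 : (deg1 (P \mPo Phi))%:Z >= (wdegp d P)%:Z - k%:Z * nabla.
  rewrite -/D0 hD0; exact: ar2 C.
have nR : R != 0 by apply: contraTneq hR => ->; rewrite msize0.
have nS0 : S != 0.
  apply: contraNneq (wtop_neq0 d hP) => S0; by rewrite ES S0 mulr0.
have h3 : (k * wdegp d R <= D0)%N.
  apply: leq_trans (wdegp_wtop_le d P); rewrite ES.
  apply: leq_trans (wdegp_pow_ge d k nR nS0); exact: leq_addr.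
split.
- split => //.
  by rewrite /E subzn.
- exact: h2.
- exact: ar3 h2 h3.
Qed.
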